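(* Suppose $\mathbf{v}=(v_0,\dots,v_{n-1})\in\mathrm{GF}(q^m)^n$ has rank $r\ge1$. Then $\mathcal{L}=\langle\mathbf{v}\rangle^\perp$ is equivalent to the $(n-r)$-th order $\mathbf{B}$-elementary extension (for some $\mathbf{B}$) of an $(r,r-1)$ linear code over $\mathrm{GF}(q^m)$ with minimum rank distance $2$.
   Context: $q$ is a prime power. For $\mathbf{x}\in\mathrm{GF}(q^m)^N$, $\mathrm{rk}(\mathbf{x})$ is the dimension over $\mathrm{GF}(q)$ of the $\mathrm{GF}(q)$-span of its coordinates; the rank distance is $\mathrm{rk}(\mathbf{x}-\mathbf{y})$ and the minimum rank distance of a code is its minimum over pairs of distinct codewords. An $(N,K)$ linear code is a $K$-dimensional $\mathrm{GF}(q^m)$-subspace of $\mathrm{GF}(q^m)^N$. $\langle\mathbf{v}\rangle=\{a\mathbf{v}:a\in\mathrm{GF}(q^m)\}$, $S^\perp=\{\mathbf{u}:\sum_iu_is_i=0\ \forall\mathbf{s}\in S\}$. For $s\ge1$ and an $s\times r$ matrix $\mathbf{B}$ over $\mathrm{GF}(q)$, the $s$-th order $\mathbf{B}$-elementary extension of a linear code $\mathcal{C}_0\subseteq\mathrm{GF}(q^m)^r$ is $\{(c_0,\dots,c_{r+s-1})\in\mathrm{GF}(q^m)^{r+s}:(c_0,\dots,c_{r-1})-(c_r,\dots,c_{r+s-1})\mathbf{B}\in\mathcal{C}_0\}$; the $0$-th order extension is $\mathcal{C}_0$. Two codes $\mathcal{C},\mathcal{C}'\subseteq\mathrm{GF}(q^m)^n$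 are equivalent (for the rank metric) if $\mathcal{C}'=\{\mathbf{c}\mathbf{M}:\mathbf{c}\in\mathcal{C}\}$ for some invertible $n\times n$ matrix $\mathbf{M}$ over $\mathrm{GF}(q)$. *)

(* Defs.v *)
(* GF(q) = F : finFieldType, GF(q^m) = L : fieldExtType F. *)
From HB Require Import structures.
From mathcomp Require Import all_boot all_order all_algebra all_field.
Set Implicit Arguments. Unset Strict Implicit. Unset Printing Implicit Defensive.
Import GRing.Theory.
Local Open Scope ring_scope.

Section RankCodes.
Variables (F : finFieldType) (L : fieldExtType F).

Definition coords (N : nat) (x : 'rV[L]_N) : seq L := [seq x 0 i | i <- enum 'I_N].

Definition rk (N : nat) (x : 'rV[L]_N) : nat := \dim (<<coords x>>%VS : {vspace L}).

Definition mulFL (a b : nat) (x : 'rV[L]_a) (M : 'M[F]_(a, b)) : 'rV[L]_b :=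
  \row_(j < b) \sum_(i < a) M i j *: x 0 i.

Definition perp_span (N : nat) (v : 'rV[L]_N) : 'rV[L]_N -> Prop :=
  fun u => forall s, s \in (<[v]>%VS : {vspace 'rV[L]_N}) ->
             \sum_(i < N) u 0 i * s 0 i = 0.

(* The (N - r)-th order B-elementary extension of C0 (length r) :
   codewords (c_0,...,c_{N-1}) with (c_0..c_{r-1}) - (c_r..c_{N-1}) B \in C0.
   (Used with r <= N; for N = r this is C0 itself.) *)
Definition elem_ext (N r : nat) (B : 'M[F]_(N - r, r)) (C0 : {vspace 'rV[L]_r})
  : 'rV[L]_N -> Prop :=
  fun c => (\row_(i < r) (coords c)`_i
            - mulFL (\row_(j < N - r) (coords c)`_(r + j)) B) \in C0.

(* minimum rank distance of a linear code; convention: a code with fewer than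
   two codewords (the zero code) has minimum distance N+1 (Singleton convention) *)
Definition min_rank_dist (N : nat) (C : {vspace 'rV[L]_N}) (d : nat) : Prop :=
  if C == 0%VS then d = N.+1 else
  (forall c c', c \in C -> c' \in C -> c != c' -> (d <= rk (c - c'))%N) /\
  (exists c c', [/\ c \in C, c' \in C, c != c' & rk (c - c') = d]).

Definition code_equiv (N : nat) (C C' : 'rV[L]_N -> Prop) : Prop :=
  exists M : 'M[F]_N, M \in unitmx /\
    forall x, C' x <-> exists2 c, C c & x = mulFL c M.

End RankCodes.

(* Main.v *)
Require Import Defs.
From HB Require Import structures.
From mathcomp Require Import all_boot all_order all_algebra all_field.
Set Implicit Arguments. Unset Strict Implicit. Unset Printing Implicit Defensive.
Import GRing.Theory.
Local Open Scope ring_scope.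
Import VectorInternalTheory.

Section H.
Variables (F : finFieldType) (L : fieldExtType F).

Lemma memvK' (vT : vectType F) (x : vT) (U : {vspace vT}) :
  (x \in U) = (v2r x <= vs2mx U)%MS.
Proof. by rewrite unfold_in /= genmxE. Qed.

Lemma coordsE N (y : 'rV[L]_N) i (hi : (i < N)%N) : (coords y)`_i = y 0 (Ordinal hi).
Proof.
rewrite /coords (nth_map (Ordinal hi)) ?size_enum_ord //.
by congr (y 0 _); apply: val_inj; rewrite /= nth_enum_ord.
Qed.

Lemma mem_coords N (y : 'rV[L]_N) i : y 0 i \in coords y.
Proof. by rewrite /coords; apply: map_f; rewrite mem_enum. Qed.

Lemma coordsP N (y : 'rV[L]_N) x : x \in coords y -> exists i, x = y 0 i.
Proof. by move=> /mapP[i _ ->]; exists i. Qed.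

Lemma mulFL_mul a b c (x : 'rV[L]_a) (A : 'M[F]_(a, b)) (B : 'M[F]_(b, c)) :
  mulFL (mulFL x A) B = mulFL x (A *m B).
Proof.
apply/rowP => j; rewrite !mxE.
under eq_bigr => i _ do rewrite mxE scaler_sumr.
rewrite exchange_big /=; apply: eq_bigr => l _; rewrite mxE scaler_suml.
by apply: eq_bigr => i _; rewrite scalerA mulrC.
Qed.

Lemma mulFL1 a (x : 'rV[L]_a) : mulFL x 1%:M = x.
Proof.
apply/rowP => j; rewrite !mxE (bigD1 j) //= big1 ?addr0.
  by rewrite mxE eqxx scale1r.
by move=> i /negbTE hij; rewrite mxE hij scale0r.
Qed.

Lemma rk_rank N (y : 'rV[L]_N) :
  rk y = \rank (\matrix_(i < N) v2r (y 0 i)).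
Proof.
set V := \matrix_(i < N) _.
have -> : rk y = \dim (mx2vs V : {vspace L}).
  congr (\dim _); apply/eqP; rewrite eqEsubv; apply/andP; split.
  - apply/span_subvP => x /coordsP[i ->].
    by rewrite memvK' /= genmxE (_ : v2r (y 0 i) = row i V) ?row_sub // rowK.
  - rewrite /subsetv mx2vsK; apply/row_subP => i.
    by rewrite rowK -memvK' memv_span // mem_coords.
by rewrite /dimv mx2vsK.
Qed.

Lemma rk_ge2 r (w : 'I_r -> L) (C0 : {vspace 'rV[L]_r}) :
  (forall c : 'rV[F]_r, \sum_k c 0 k *: w k = 0 -> c = 0) ->
  (forall y, (y \in C0) = (\sum_k y 0 k * w k == 0)) ->
  forall d, d \in C0 -> d != 0 -> (2 <= rk d)%N.
Proof.
move=> hind hC d hd dn0; rewrite leqNgt; apply/negP => hlt.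
have : ~~ [forall j, d 0 j == 0].
  by apply: contra dn0 => /forallP h; apply/eqP/rowP => j; rewrite mxE; apply/eqP/h.
case/forallPn => j hj.
have hle : (<[d ord0 j]> <= <<coords d>>)%VS by rewrite -memvE memv_span // mem_coords.
have hsub : (<<coords d>> <= <[d ord0 j]>)%VS.
  have h1 : (1 <= \dim <<coords d>>)%N.
    by rewrite (leq_trans _ (dimvS hle)) // dim_vline hj.
  rewrite -(dimv_leqif_sup hle).2 dim_vline hj /= eqn_leq h1 /=; exact: hlt.
have : forall k, exists a : F, d 0 k = a *: d 0 j.
  by move=> k; apply/vlineP; apply: (subvP hsub); rewrite memv_span // mem_coords.
case/fin_all_exists => f hf.
have hs : \sum_k (\row_k f k) 0 k *: w k = 0.
  move: hd; rewrite hC => /eqP hd.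
  have e : \sum_k d 0 k * w k = d 0 j * \sum_k f k *: w k.
    by rewrite mulr_sumr; apply: eq_bigr => k _; rewrite hf -scalerAl scalerAr.
  move: hd; rewrite e => /eqP; rewrite mulf_eq0 (negbTE hj) /= => /eqP hs0.
  rewrite -[RHS]hs0; by apply: eq_bigr => k _; rewrite mxE.
have := hind _ hs => /rowP/(_ j); rewrite !mxE => hfj.
by move: hj; rewrite hf hfj scale0r eqxx.
Qed.
Lemma mrd2 r (w : 'I_r -> L) (C0 : {vspace 'rV[L]_r}) :
  (forall c : 'rV[F]_r, \sum_k c 0 k *: w k = 0 -> c = 0) ->
  (forall y, (y \in C0) = (\sum_k y 0 k * w k == 0)) ->
  \dim C0 = r.-1 -> (1 <= r)%N -> min_rank_dist C0 2.
Proof.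
move=> hind hC hdim hr; rewrite /min_rank_dist; case: ifP => [/eqP C00 | Cn0].
  by move: hdim; rewrite C00 dimv0; case: r {w C0 hind hC C00} hr => [|[|r']].
have hr2 : (1 < r)%N.
  move: Cn0; rewrite -dimv_eq0 hdim.
  by case: r {w C0 hind hC hdim} hr => [|[|r']].
split.
  move=> c c' hc hc' hne; apply: (rk_ge2 hind hC); first by rewrite memvB.
  by rewrite subr_eq0.
have hw : forall k, w k != 0.
  move=> k; apply/eqP => hk.
  have := hind (delta_mx 0 k); rewrite (bigD1 k) //= big1 ?addr0.
    rewrite mxE !eqxx scale1r hk => /(_ erefl)/rowP/(_ k); rewrite !mxE !eqxx.
    by move/eqP; rewrite oner_eq0.
  by move=> i hik; rewrite mxE (negbTE hik) andbF scale0r.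
pose i0 := Ordinal (ltn_trans (ltnSn 0) hr2); pose i1 := Ordinal hr2.
have h10 : (i1 == i0) = false by [].
pose c : 'rV[L]_r := \row_k (if k == i0 then w i1 else if k == i1 then - w i0 else 0).
have hc : c \in C0.
  rewrite hC (bigD1 i0) //= (bigD1 i1) ?h10 //= big1 ?addr0.
    by rewrite !mxE eqxx h10 eqxx mulNr mulrC subrr.
  by move=> k /andP[/negbTE h0 /negbTE h1]; rewrite mxE h0 h1 mul0r.
have cn0 : c != 0.
  by apply/eqP => /rowP/(_ i0); rewrite !mxE eqxx; apply/eqP/hw.
exists c, (0 : 'rV[L]_r); split; [exact: hc|exact: mem0v|exact: cn0|].
rewrite subr0; apply/eqP; rewrite eqn_leq (rk_ge2 hind hC) // andbT.
have hs : (<<coords c>> <= <[w i1]> + <[w i0]>)%VS.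
  apply/span_subvP => x /coordsP[k ->]; rewrite mxE.
  case: ifP => _; first by apply: (subvP (addvSl _ _)); exact: memv_line.
  case: ifP => _; last by rewrite mem0v.
  by apply: (subvP (addvSr _ _)); rewrite memvN memv_line.
apply: leq_trans (dimvS hs) _.
apply: leq_trans (dimv_add_leqif _ _).1 _.
by rewrite !dim_vline !hw.
Qed.
Lemma rV1_eq0 (z : 'rV[L]_1) : (z == 0) = (z 0 0 == 0).
Proof.
apply/eqP/eqP => [->|h]; first by rewrite mxE.
by apply/rowP => j; rewrite ord1 h mxE.
Qed.

Lemma mulFL0 a b (x : 'rV[L]_a) : mulFL x (0 : 'M[F]_(a, b)) = 0.
Proof. by apply/rowP => j; rewrite !mxE big1 // => i _; rewrite mxE scale0r. Qed.

Lemma ind_nz r (w : 'I_r -> L) :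
  (forall c : 'rV[F]_r, \sum_k c 0 k *: w k = 0 -> c = 0) -> forall k, w k != 0.
Proof.
move=> hind k; apply/eqP => hk.
have := hind (delta_mx 0 k); rewrite (bigD1 k) //= big1 ?addr0.
  rewrite mxE !eqxx scale1r hk => /(_ erefl)/rowP/(_ k); rewrite !mxE !eqxx.
  by move/eqP; rewrite oner_eq0.
by move=> i hik; rewrite mxE (negbTE hik) andbF scale0r.
Qed.
End H.

Unset Implicit Arguments.
Set Strict Implicit.

Theorem corollary1 (F : finFieldType) (L : fieldExtType F) (n : nat)
  (v : 'rV[L]_n) :
  (1 <= rk v)%N ->
  exists (B : 'M[F]_(n - rk v, rk v)) (C0 : {vspace 'rV[L]_(rk v)}),
    [/\ \dim C0 = (rk v).-1,
        min_rank_dist C0 2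
      & code_equiv (perp_span v) (elem_ext B C0)].
Proof.
move=> hr1.
pose V := \matrix_(i < n) v2r (v 0 i).
have hrV : \rank V = rk v by rewrite rk_rank.
have hrn : (rk v <= n)%N by rewrite -hrV rank_leq_row.
have hrm : (rk v <= dim L)%N by rewrite -hrV rank_leq_col.
set r := rk v in hrV hrn hrm hr1 *.
pose P := col_ebase V. pose U := row_ebase V.
pose Wr : 'M[F]_(r, dim L) := pid_mx r *m U.
pose w (k : 'I_r) : L := r2v (row k Wr).
have hv : forall i, v 0 i = \sum_(k < r) P i (widen_ord hrn k) *: w k.
  move=> i.
  have -> : v 0 i = r2v (row i V) by rewrite rowK v2rK.
  have -> : row i V = row i (P *m (pid_mx r *m U)) by rewrite mulmxA -hrV mulmx_ebase.
  rewrite row_mul mulmx_sum_row linear_sum.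
  rewrite (bigID (fun k : 'I_n => (k < r)%N)) /= big_ord_narrow.
  rewrite [X in _ + X]big1 ?addr0.
    apply: eq_bigr => k _; rewrite linearZ /=; congr (_ *: r2v _).
      by rewrite mxE. by rewrite /Wr !row_mul; congr (_ *m _); apply/rowP => j; rewrite !mxE.
  move=> k hk; rewrite row_mul.
  have -> : row k (pid_mx r : 'M[F]_(n, dim L)) = 0.
    by apply/rowP => j; rewrite !mxE (negbTE hk) andbF.
  by rewrite mul0mx scaler0 linear0.
have hind : forall c : 'rV[F]_r, \sum_k c 0 k *: w k = 0 -> c = 0.
  move=> c hc.
  have h0 : c *m Wr = 0.
    apply: r2v_inj; rewrite linear0 mulmx_sum_row linear_sum -[RHS]hc.
    by apply: eq_bigr => k _; rewrite linearZ.
  have h1 : c *m (pid_mx r : 'M[F]_(r, dim L)) = 0.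
    by rewrite -(mulmxK (row_ebase_unit V) (c *m pid_mx r)) -[c *m _ *m U]mulmxA h0 mul0mx.
  have : c *m (pid_mx r : 'M[F]_(r, dim L)) *m (pid_mx r : 'M[F]_(dim L, r)) = c.
    by rewrite -mulmxA mul_pid_mx minnn (minn_idPr hrm) pid_mx_1 mulmx1.
  by rewrite h1 mul0mx => <-.
pose wc : 'M[L]_(r, 1) := \col_k w k.
pose f : 'Hom('rV[L]_r, 'rV[L]_1) := linfun (mulmxr wc).
pose C0 := lker f.
have hC : forall y, (y \in C0) = (\sum_k y 0 k * w k == 0).
  move=> y; rewrite memv_ker lfunE /= rV1_eq0 !mxE.
  by apply/eqP/eqP => h; rewrite -[RHS]h; apply: eq_bigr => k _; rewrite /wc mxE.
have hdim : \dim C0 = r.-1.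
  have := limg_ker_dim f fullv; rewrite capfv dimvf.
  have -> : \dim (f @: fullv)%VS = 1%N.
    apply/eqP; rewrite eqn_leq; apply/andP; split.
      by rewrite (leq_trans (dimvS (subvf _))) // dimvf dim_matrix.
    rewrite lt0n dimv_eq0; apply/negP => /eqP h0.
    pose k0 : 'I_r := Ordinal hr1.
    have := memv_img f (memvf (delta_mx 0 k0)); rewrite h0 memv0 lfunE /= -rowE.
    rewrite rV1_eq0 !mxE; exact/negP/(ind_nz hind).
  rewrite dim_matrix mul1r addn1 => h; exact: (congr1 predn h).
exists 0, C0; split => //; first exact: mrd2 hind hC hdim hr1.
have hp : forall c, perp_span v c <-> \sum_i c 0 i * v 0 i = 0.
  move=> c; split => [h | h s /vlineP [a ->]]; first by apply: h; exact: memv_line.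
  under eq_bigr => i _ do rewrite mxE mulrCA.
  by rewrite -mulr_sumr h mulr0.
have hsum : forall c : 'rV[L]_n, \sum_i c 0 i * v 0 i
    = \sum_k (mulFL c P) 0 (widen_ord hrn k) * w k.
  move=> c; under eq_bigr => i _ do rewrite hv mulr_sumr.
  rewrite exchange_big /=; apply: eq_bigr => k _; rewrite mxE mulr_suml.
  by apply: eq_bigr => i _; rewrite -scalerAr scalerAl.
have he : forall y : 'rV[L]_n, elem_ext 0 C0 y <-> \sum_k y 0 (widen_ord hrn k) * w k = 0.
  move=> y; rewrite /elem_ext mulFL0 subr0 hC.
  have -> : \sum_k (\row_(i < r) (coords y)`_i) 0 k * w k
       = \sum_k y 0 (widen_ord hrn k) * w k.
    apply: eq_bigr => k _; rewrite mxE (coordsE y (widen_ord_proof k hrn)).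
    by congr (y 0 _ * _); apply: val_inj.
  by split => /eqP.
have key : forall c : 'rV[L]_n, perp_span v c <-> elem_ext 0 C0 (mulFL c P).
  move=> c; apply: (iff_trans (hp c)); rewrite hsum; apply: iff_sym; apply: he.
exists P; split; first exact: col_ebase_unit.
move=> x; split.
  move=> hx; exists (mulFL x (invmx P)).
    by apply/key; rewrite mulFL_mul mulVmx ?col_ebase_unit // mulFL1.
  by rewrite mulFL_mul mulVmx ?col_ebase_unit // mulFL1.
by case=> c hc ->; apply/key.
Qed.
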